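(* Let $I$ be a finite set and let $\{g_i: i\in I\}$ be an independent set of elements of a free group $F_n$, i.e. the $g_i$ are pairwise distinct and form a free basis of the subgroup $G=\langle g_i: i\in I\rangle$. For each $i\in I$ let $G_i=\langle g_j: j\in I\setminus\{i\}\rangle$. Then the coset incidence system $\Gamma(G;(G_i)_{i\in I})$ is flag-transitive, i.e. $G$ acting by right multiplication is transitive on the set of flags of type $J$ for every $J\subseteq I$.
   Context: An incidence system is a quadruple $(X,*,t,I)$ with $X$ a set, $I$ a finite type set, $t:X\to I$ surjective, and $*$ a symmetric relation with no two elements of the same type incident. A flag is a set of pairwise incident elements; its type is the set of types of its elements. Coset incidence system: given a group $G$ and subgroups $(G_i)_{i\in I}$, $\Gamma(G;(G_i)_{i\in I})$ has as elements all right cosets $G_ig$ ($g\in G$, $i\in I$), with $t(G_ig)=i$, and $G_ig_1 * G_jg_2$ iff $G_ig_1\cap G_jg_2\neq\emptyset$ (for cosets of different types). $G$ acts on it by right multiplication, preserving types and incidence. *)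

(* Defs.v *)
(* The free group F_n is modelled concretely by reduced words. *)
From mathcomp Require Import all_boot.
Set Implicit Arguments. Unset Strict Implicit. Unset Printing Implicit Defensive.

(* A letter over an alphabet A: (a, true) stands for a, (a, false) for a^-1. *)
Definition linv {A : Type} (x : A * bool) : A * bool := (x.1, ~~ x.2).

Fixpoint reduced {A : eqType} (w : seq (A * bool)) : bool :=
  match w with
  | x :: ((y :: _) as w') => (y != linv x) && reduced w'
  | _ => true
  end.

Definition red_step {A : eqType} (s : seq (A * bool)) (x : A * bool) :=
  match s with
  | y :: s' => if y == linv x then s' else x :: s
  | [::] => [:: x]
  end.
Definition freduce {A : eqType} (w : seq (A * bool)) : seq (A * bool) :=
  rev (foldl red_step [::] w).

Definition fword (n : nat) := seq ('I_n * bool).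
Definition in_Fn (n : nat) (w : fword n) : bool := reduced w.
Definition fg_one (n : nat) : fword n := [::].
Definition fg_mul (n : nat) (u v : fword n) : fword n := freduce (u ++ v).
Definition fg_inv (n : nat) (w : fword n) : fword n := rev (map linv w).

Inductive gen_sub (n : nat) (S : fword n -> Prop) : fword n -> Prop :=
| gs_one : gen_sub S (fg_one n)
| gs_gen x : S x -> gen_sub S x
| gs_mul x y : gen_sub S x -> gen_sub S y -> gen_sub S (fg_mul x y)
| gs_inv x : gen_sub S x -> gen_sub S (fg_inv x).

Definition fg_eval (n : nat) (I : Type) (g : I -> fword n) (w : seq (I * bool))
  : fword n :=
  foldr (fun x acc => fg_mul (if x.2 then g x.1 else fg_inv (g x.1)) acc)
        (fg_one n) w.

Definition independent_set (n : nat) (I : finType) (g : I -> fword n) : Prop :=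
  [/\ forall i, in_Fn (g i),
      injective g &
      forall w : seq (I * bool), reduced w -> fg_eval g w = fg_one n -> w = [::]].

Definition Gsub (n : nat) (I : finType) (g : I -> fword n) : fword n -> Prop :=
  gen_sub (fun x => exists i, x = g i).
Definition Gi (n : nat) (I : finType) (g : I -> fword n) (i : I) : fword n -> Prop :=
  gen_sub (fun x => exists j, j != i /\ x = g j).

Definition rcoset (n : nat) (H : fword n -> Prop) (x : fword n) : fword n -> Prop :=
  fun y => exists h, H h /\ y = fg_mul h x.

Definition rmulset (n : nat) (C : fword n -> Prop) (x : fword n) : fword n -> Prop :=
  fun z => exists y, C y /\ z = fg_mul y x.

(* A flag of type J in Gamma(G; (G_i)_i): for each j in J a coset G_j (c j)
   with c j in G, these cosets pairwise incident (nonempty intersection).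
   (Since elements of equal type are never incident, a flag has at most one
   element of each type, so it is given by one coset per type in J.) *)
Definition is_flag (n : nat) (I : finType) (g : I -> fword n) (J : {set I})
    (c : I -> fword n) : Prop :=
  (forall j, j \in J -> Gsub g (c j)) /\
  (forall j k, j \in J -> k \in J -> j != k ->
     exists y, rcoset (Gi g j) (c j) y /\ rcoset (Gi g k) (c k) y).

Definition flag_transitive (n : nat) (I : finType) (g : I -> fword n) : Prop :=
  forall (J : {set I}) (c1 c2 : I -> fword n),
    is_flag g J c1 -> is_flag g J c2 ->
    exists x, Gsub g x /\
      forall j, j \in J -> forall y,
        rmulset (rcoset (Gi g j) (c1 j)) x y <-> rcoset (Gi g j) (c2 j) y.

(* Main.v *)
Require Import Defs.
From mathcomp Require Import all_boot zify.
Set Implicit Arguments. Unset Strict Implicit. Unset Printing Implicit Defensive.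

Definition winv {A : Type} (w : seq (A * bool)) := rev (map linv w).

Lemma linvK {A : Type} (x : A * bool) : linv (linv x) = x.
Proof. by case: x => a b; rewrite /linv /= negbK. Qed.

Lemma linv_eq {A : eqType} (x y : A * bool) : (y == linv x) = (x == linv y).
Proof.
by apply/eqP/eqP => ->; rewrite linvK.
Qed.

Lemma reduced_cons {A : eqType} (z : A * bool) w :
  reduced (z :: w) = (if w is y :: _ then y != linv z else true) && reduced w.
Proof. by case: w. Qed.

Lemma reduced_rcons2 {A : eqType} (u : seq (A * bool)) y x :
  reduced (rcons (rcons u y) x) = reduced (rcons u y) && (x != linv y).
Proof.
elim: u => [|z u IH]; first by rewrite /= andbT.
rewrite rcons_cons rcons_cons reduced_cons [in RHS]reduced_cons IH.
case: u IH => [|v u] IH /=; first by rewrite andbT.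
by rewrite andbA.
Qed.

Lemma reduced_rev {A : eqType} (w : seq (A * bool)) : reduced (rev w) = reduced w.
Proof.
elim: w => [|x w IH] //.
rewrite rev_cons reduced_cons.
case: w IH => [|y w'] IH //=.
rewrite rev_cons reduced_rcons2 -rev_cons IH /= linv_eq andbC.
by [].
Qed.

Lemma reduced_catr {A : eqType} (u v : seq (A * bool)) : reduced (u ++ v) -> reduced v.
Proof.
elim: u => [|x u IH] // H; apply: IH.
by move: H; rewrite cat_cons reduced_cons => /andP [].
Qed.

Lemma reduced_catl {A : eqType} (u v : seq (A * bool)) : reduced (u ++ v) -> reduced u.
Proof.
by move=> H; rewrite -reduced_rev; apply: (@reduced_catr _ (rev v)); rewrite -rev_cat reduced_rev.
Qed.

Lemma reduced_map_linv {A : eqType} (w : seq (A * bool)) : reduced (map linv w) = reduced w.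
Proof.
elim: w => [|x w IH] //. rewrite map_cons reduced_cons [in RHS]reduced_cons IH.
case: w {IH} => [|y w] //=.
congr (~~ _ && _).
apply/eqP/eqP => [E|->]; last by [].
by rewrite -[y]linvK E linvK.
Qed.

Lemma reduced_inv {A : eqType} (w : seq (A * bool)) : reduced (winv w) = reduced w.
Proof. by rewrite /winv reduced_rev reduced_map_linv. Qed.

Lemma winvK {A : Type} (w : seq (A * bool)) : winv (winv w) = w.
Proof.
rewrite /winv map_rev revK -map_comp.
elim: w => [|x w IH] //=; by rewrite IH linvK.
Qed.

Lemma winv_cat {A : Type} (u v : seq (A * bool)) : winv (u ++ v) = winv v ++ winv u.
Proof. by rewrite /winv map_cat rev_cat. Qed.

Lemma winv_cons {A : Type} (x : A * bool) w : winv (x :: w) = rcons (winv w) (linv x).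
Proof. by rewrite /winv /= rev_cons. Qed.

Lemma rs_red {A : eqType} (s : seq (A * bool)) x : reduced s -> reduced (red_step s x).
Proof.
case: s => [|y s] // H; rewrite /red_step.
case: ifP => E; first by move: H; rewrite reduced_cons => /andP [].
by rewrite reduced_cons E H.
Qed.

Lemma fold_red {A : eqType} (s w : seq (A * bool)) : reduced s -> reduced (foldl red_step s w).
Proof. elim: w s => [|x w IH] s //= H; apply: IH; exact: rs_red. Qed.

Lemma freduce_red {A : eqType} (w : seq (A * bool)) : reduced (freduce w).
Proof. by rewrite /freduce reduced_rev; apply: fold_red. Qed.

Lemma fold_push {A : eqType} (s w : seq (A * bool)) :
  reduced (rev s ++ w) -> foldl red_step s w = rev w ++ s.
Proof.
elim: w s => [|x w IH] s /=; first by rewrite cats0.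
move=> H.
have -> : red_step s x = x :: s.
  case: s H => [|y s] //= H.
  have : reduced (rcons (rcons (rev s) y) x).
    by apply: (@reduced_catl _ _ w); rewrite cat_rcons -rev_cons.
  rewrite reduced_rcons2 => /andP [_ Hxy].
  by rewrite linv_eq (negbTE Hxy).
rewrite IH; first by rewrite rev_cons cat_rcons.
by rewrite rev_cons cat_rcons.
Qed.

Lemma freduce_id {A : eqType} (w : seq (A * bool)) : reduced w -> freduce w = w.
Proof. by move=> H; rewrite /freduce fold_push ?cats0 ?revK. Qed.

Lemma fold_rev_stack {A : eqType} (s : seq (A * bool)) :
  reduced s -> foldl red_step [::] (rev s) = s.
Proof. by move=> H; rewrite fold_push ?revK ?cats0 //= reduced_rev. Qed.

Lemma rs_cancel {A : eqType} (s : seq (A * bool)) x :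
  reduced s -> red_step (red_step s x) (linv x) = s.
Proof.
case: s => [|y s] /= H; first by rewrite linvK eqxx.
case: ifP => E.
  move/eqP: E H => -> H.
  case: s H => [|z s] //= H.
  move: H => /andP [Hz _].
  by rewrite (negbTE Hz).
by rewrite /red_step linvK eqxx.
Qed.

Lemma rs_cancel' {A : eqType} (s : seq (A * bool)) x :
  reduced s -> red_step (red_step s (linv x)) x = s.
Proof. by move=> H; have := rs_cancel (linv x) H; rewrite linvK. Qed.

Lemma fold_freduce {A : eqType} (s w : seq (A * bool)) :
  reduced s -> foldl red_step s (freduce w) = foldl red_step s w.
Proof.
move=> Hs; elim/last_ind: w => [|w x IH] //.
rewrite /freduce foldl_rcons [in RHS]foldl_rcons -IH /freduce.
case: (foldl red_step [::] w) => [|y T] //=.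
case: ifP => E.
  move/eqP: E => ->.
  by rewrite [in RHS]rev_cons foldl_rcons rs_cancel' //; apply: fold_red.
by rewrite rev_cons foldl_rcons.
Qed.

Lemma freduce_catl {A : eqType} (u v : seq (A * bool)) :
  freduce (freduce u ++ v) = freduce (u ++ v).
Proof.
rewrite {1}/freduce /freduce foldl_cat fold_rev_stack ?foldl_cat //.
exact: fold_red.
Qed.

Lemma freduce_catr {A : eqType} (u v : seq (A * bool)) :
  freduce (u ++ freduce v) = freduce (u ++ v).
Proof.
rewrite /freduce foldl_cat -/(freduce v) fold_freduce ?foldl_cat //.
exact: fold_red.
Qed.

Lemma fold_inv {A : eqType} (s w : seq (A * bool)) :
  reduced s -> foldl red_step s (w ++ winv w) = s.
Proof.
elim: w s => [|x w IH] s H //=.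
by rewrite winv_cons -rcons_cat foldl_rcons IH ?rs_cancel // rs_red.
Qed.

Lemma freduce_inv_r {A : eqType} (w : seq (A * bool)) : freduce (w ++ winv w) = [::].
Proof. by rewrite /freduce fold_inv. Qed.

Lemma freduce_inv_l {A : eqType} (w : seq (A * bool)) : freduce (winv w ++ w) = [::].
Proof. by rewrite -{2}(winvK w) freduce_inv_r. Qed.

Lemma freduce_cancel {A : eqType} (u z v : seq (A * bool)) :
  freduce (u ++ z ++ winv z ++ v) = freduce (u ++ v).
Proof.
have E : freduce (z ++ winv z ++ v) = freduce v.
  by rewrite catA -freduce_catl freduce_inv_r.
by rewrite -[LHS]freduce_catr E freduce_catr.
Qed.

Lemma freduce_cancel' {A : eqType} (u z v : seq (A * bool)) :
  freduce (u ++ winv z ++ z ++ v) = freduce (u ++ v).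
Proof. by rewrite -{2}(winvK z) freduce_cancel. Qed.

Lemma fold_all {A : eqType} (p : pred (A * bool)) s w :
  all p s -> all p w -> all p (foldl red_step s w).
Proof.
elim: w s => [|x w IH] s //= Hs /andP [Hx Hw]; apply: IH => //.
case: s Hs => [|y s] /=; first by rewrite Hx.
case: ifP => _ /andP [Hy Hs] /=; by rewrite ?Hx ?Hy ?Hs.
Qed.

Lemma freduce_all {A : eqType} (p : pred (A * bool)) w : all p w -> all p (freduce w).
Proof. by move=> H; rewrite /freduce all_rev; apply: fold_all. Qed.

Definition tsuf {I : eqType} (j : I) (w : seq (I * bool)) :=
  drop (find (fun x => x.1 == j) w) w.
Definition av {I : eqType} (j : I) (w : seq (I * bool)) := all (fun x => x.1 != j) w.

Lemma av_take {I : eqType} (j : I) w : av j (take (find (fun x => x.1 == j) w) w).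
Proof. elim: w => [|x w IH] //=; case: ifP => //= ->; exact: IH. Qed.

Lemma drop_find_head {I : eqType} (j : I) w :
  if tsuf j w is y :: _ then y.1 == j else true.
Proof. rewrite /tsuf; elim: w => [|x w IH] //=; case: ifP => //. Qed.

Lemma find_av_cat {I : eqType} (j : I) u t :
  av j u -> find (fun x => x.1 == j) (u ++ t) = size u + find (fun x => x.1 == j) t.
Proof. elim: u => [|x u IH] //= /andP [Hx Hu]; by rewrite (negbTE Hx) IH. Qed.

Lemma find_drop {T : Type} (p : pred T) k s :
  k <= find p s -> find p (drop k s) = find p s - k.
Proof.
elim: s k => [|x s IH] k; first by case: k.
case: k => [|k]; first by rewrite drop0 subn0.
rewrite /=; case: (p x) => //= H; by rewrite IH.
Qed.

Lemma tsufK {I : eqType} (j : I) w : tsuf j (tsuf j w) = tsuf j w.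
Proof. rewrite /tsuf find_drop // subnn drop0 //. Qed.

Lemma reduced_tsuf {I : eqType} (j : I) w : reduced w -> reduced (tsuf j w).
Proof. by rewrite -{1}(cat_take_drop (find (fun x => x.1 == j) w) w); apply: reduced_catr. Qed.

Lemma red_join {I : eqType} (j : I) u t :
  reduced u -> reduced t -> av j u -> (if t is y :: _ then y.1 == j else true) ->
  reduced (u ++ t).
Proof.
elim: u => [|x u IH] // Hu Ht /andP [Hx Hav] Hh.
rewrite cat_cons reduced_cons IH //; last by move: Hu; rewrite reduced_cons => /andP [].
case: u Hu {IH Hav} => [|z u] /= Hu.
  case: t Ht Hh => [|y t] //= _ /eqP Hy; rewrite andbT.
  by apply/eqP => E; move: Hx; rewrite -Hy E /= eqxx.
by move: Hu => /andP [-> _].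
Qed.

Lemma tsuf_mulE {I : eqType} (j : I) h a :
  av j h -> reduced a -> tsuf j (freduce (h ++ a)) = tsuf j a.
Proof.
move=> Hh Ha.
set k := find (fun x => x.1 == j) a.
have Ea : a = take k a ++ tsuf j a by rewrite cat_take_drop.
rewrite {1}Ea catA -freduce_catl.
set p' := freduce (h ++ take k a).
have Hp' : av j p' by apply: freduce_all; rewrite /av all_cat; apply/andP; split; [exact: Hh | exact: av_take].
have Ht : reduced (tsuf j a) by apply: reduced_tsuf.
rewrite freduce_id; last by apply: (red_join (j := j)) => //; [apply: freduce_red | apply: drop_find_head].
rewrite /tsuf find_av_cat // -/(tsuf j a).
have -> : find (fun x => x.1 == j) (tsuf j a) = 0.
  by have := drop_find_head j a; case: (tsuf j a) => [|y t] //= ->.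
by rewrite addn0 drop_size_cat.
Qed.

Lemma tsuf_mulI {I : eqType} (j : I) a b :
  reduced b -> tsuf j a = tsuf j b -> exists h, av j h /\ freduce (h ++ a) = b.
Proof.
move=> Hb E.
exists (take (find (fun x => x.1 == j) b) b ++ winv (take (find (fun x => x.1 == j) a) a)).
split.
  rewrite /av all_cat; apply/andP; split; first exact: av_take.
  rewrite /winv all_rev all_map.
  by apply/allP => x /(allP (av_take j a)).
have Ea : a = take (find (fun x => x.1 == j) a) a ++ tsuf j a by rewrite cat_take_drop.
rewrite [X in freduce (_ ++ X)]Ea -catA freduce_cancel'.
by rewrite E /tsuf cat_take_drop freduce_id.
Qed.

Definition gl (n : nat) (I : Type) (g : I -> fword n) (x : I * bool) : fword n :=
  if x.2 then g x.1 else winv (g x.1).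

Lemma fe_cons n (I : Type) (g : I -> fword n) x w :
  fg_eval g (x :: w) = freduce (gl g x ++ fg_eval g w).
Proof. by []. Qed.

Lemma fe_nil n (I : Type) (g : I -> fword n) : fg_eval g [::] = [::].
Proof. by []. Qed.

Lemma fe_red n (I : Type) (g : I -> fword n) w : reduced (fg_eval g w).
Proof. case: w => [|x w] //; rewrite fe_cons; exact: freduce_red. Qed.

Lemma fe_cat n (I : Type) (g : I -> fword n) u v :
  fg_eval g (u ++ v) = freduce (fg_eval g u ++ fg_eval g v).
Proof.
elim: u => [|x u IH]; first by rewrite /= freduce_id // fe_red.
by rewrite cat_cons !fe_cons IH freduce_catr freduce_catl catA.
Qed.

Lemma fe_pair n (I : Type) (g : I -> fword n) x w :
  fg_eval g (linv x :: x :: w) = fg_eval g w.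
Proof.
rewrite !fe_cons freduce_catr /gl /=.
case: (x.2) => /=.
  by rewrite -[_ ++ _]cat0s freduce_cancel' /= freduce_id // fe_red.
by rewrite -[_ ++ _]cat0s freduce_cancel /= freduce_id // fe_red.
Qed.

Lemma fe_fold n (I : eqType) (g : I -> fword n) s w :
  fg_eval g (rev (foldl red_step s w)) = fg_eval g (rev s ++ w).
Proof.
elim: w s => [|x w IH] s /=; first by rewrite cats0.
rewrite IH.
case: s => [|y s] //=.
case: ifP => E.
  move/eqP: E => ->.
  by rewrite rev_cons cat_rcons !fe_cat fe_pair.
by rewrite rev_cons cat_rcons.
Qed.

Lemma fe_reduce n (I : eqType) (g : I -> fword n) w :
  fg_eval g (freduce w) = fg_eval g w.
Proof. by rewrite /freduce fe_fold. Qed.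

Lemma fe_catl n (I : eqType) (g : I -> fword n) u v :
  fg_eval g (freduce u ++ v) = fg_eval g (u ++ v).
Proof. by rewrite -fe_reduce freduce_catl fe_reduce. Qed.

Lemma fe_inv n (I : eqType) (g : I -> fword n) u :
  fg_eval g (winv u) = winv (fg_eval g u).
Proof.
set a := fg_eval g u; set b := fg_eval g (winv u).
have Hab : freduce (a ++ b) = [::].
  by rewrite /a /b -fe_cat -fe_reduce freduce_inv_r.
have Ha : reduced a by apply: fe_red.
have Hb : reduced b by apply: fe_red.
have E1 : freduce ([::] ++ winv a ++ a ++ b) = b by rewrite freduce_cancel' /= freduce_id.
have E2 : freduce (winv a ++ a ++ b) = winv a.
  by rewrite -freduce_catr Hab cats0 freduce_id // reduced_inv.
by rewrite -[LHS]E1 /= E2.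
Qed.

Lemma fe_inj n (I : eqType) (g : I -> fword n) :
  (forall w : seq (I * bool), reduced w -> fg_eval g w = fg_one n -> w = [::]) ->
  forall u v, reduced u -> reduced v -> fg_eval g u = fg_eval g v -> u = v.
Proof.
move=> Hind u v Hu Hv E.
have H0 : freduce (winv u ++ v) = [::].
  apply: Hind; first exact: freduce_red.
  by rewrite fe_reduce fe_cat fe_inv E freduce_inv_l.
have : freduce (u ++ freduce (winv u ++ v)) = freduce ([::] ++ v).
  by rewrite freduce_catr -[u ++ _]cat0s freduce_cancel.
by rewrite H0 cats0 /= !freduce_id.
Qed.

Lemma gen_char n (I : eqType) (g : I -> fword n) (P : pred I) (S : fword n -> Prop) :
  (forall i, reduced (g i)) -> (forall x, S x <-> exists i, P i /\ x = g i) ->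
  forall y, gen_sub S y <-> exists w, all (fun x => P x.1) w /\ y = fg_eval g w.
Proof.
move=> Hg HS y; split.
  elim => [|x /HS [i [Pi ->]]|x1 x2 _ [w1 [H1 ->]] _ [w2 [H2 ->]]|x _ [w [Hw ->]]].
  - by exists [::].
  - exists [:: (i, true)]; split; first by rewrite /= Pi.
    by rewrite fe_cons fe_nil /gl /= cats0 freduce_id.
  - exists (w1 ++ w2); split; first by rewrite all_cat H1 H2.
    by rewrite fe_cat.
  - exists (winv w); split; last by rewrite fe_inv.
    by rewrite /winv all_rev all_map; apply/allP => z /(allP Hw).
move=> [w [Hw ->]].
elim: w Hw => [|x w IH]; first by move=> _; apply: gs_one.
move=> Hxw; case/andP: Hxw => Px Hw; rewrite fe_cons.
apply: gs_mul; last exact: IH.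
rewrite /gl; case: (x.2).
  by apply: gs_gen; apply/HS; exists x.1.
by apply: gs_inv; apply: gs_gen; apply/HS; exists x.1.
Qed.

Lemma Gsub_char n (I : finType) (g : I -> fword n) :
  (forall i, reduced (g i)) -> forall y, Gsub g y <-> exists w : seq (I * bool), y = fg_eval g w.
Proof.
move=> Hg y; rewrite /Gsub.
have H := @gen_char n I g predT (fun x => exists i, x = g i) Hg.
have H' : forall x, (exists i, x = g i) <-> exists i, predT i /\ x = g i.
  by move=> x; split => [[i ->]|[i [_ ->]]]; exists i.
move: (H H' y) => [H1 H2]; split.
  by move/H1 => [w [_ ->]]; exists w.
by move=> [w Ew]; apply: H2; exists w; split => //; apply/allP.
Qed.

Lemma Gi_char n (I : finType) (g : I -> fword n) j :
  (forall i, reduced (g i)) -> forall y, Gi g j y <-> exists w, av j w /\ y = fg_eval g w.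
Proof.
move=> Hg y; rewrite /Gi.
apply: (@gen_char n I g (fun i => i != j)) => // x.
Qed.

Definition Cos n (I : finType) (g : I -> fword n) (j : I) a (y : fword n) :=
  exists b, reduced b /\ y = fg_eval g b /\ tsuf j b = tsuf j a.

Lemma coset_char n (I : finType) (g : I -> fword n) j a y :
  (forall i, reduced (g i)) -> reduced a ->
  rcoset (Gi g j) (fg_eval g a) y <-> Cos g j a y.
Proof.
move=> Hg Ha; split.
  move=> [h [/(Gi_char _ Hg) [w [Hw ->]] ->]].
  exists (freduce (w ++ a)); split; first exact: freduce_red.
  split; first by rewrite fe_reduce fe_cat.
  exact: tsuf_mulE.
move=> [b [Hb [-> E]]].
have [h [Hh Eh]] := tsuf_mulI Hb (esym E).
exists (fg_eval g h); split; first by apply/(Gi_char _ Hg); exists h.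
by rewrite -Eh fe_reduce fe_cat.
Qed.

Lemma cos_tsuf n (I : finType) (g : I -> fword n) j a a' y :
  tsuf j a = tsuf j a' -> Cos g j a y <-> Cos g j a' y.
Proof. by move=> E; split => [[b [Hb [Ey Eb]]]|[b [Hb [Ey Eb]]]]; exists b; rewrite Eb ?E. Qed.

Lemma common n (I : finType) (g : I -> fword n) (J : {set I}) c :
  independent_set g -> is_flag g J c ->
  exists z, reduced z /\ forall j, j \in J -> forall y,
    rcoset (Gi g j) (c j) y <-> Cos g j z y.
Proof.
move=> [Hg _ Hind] [HG Hinc].
have : forall j, exists a, j \in J -> reduced a /\ c j = fg_eval g a.
  move=> j; case: (boolP (j \in J)) => Hj; last by exists [::].
  have [w Ew] := (Gsub_char Hg (c j)).1 (HG j Hj).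
  by exists (freduce w) => _; rewrite fe_reduce; split => //; apply: freduce_red.
case/fin_all_exists => a Ha.
case: (pickP (mem J)) => [m0 Hm0|HJ]; last first.
  by exists [::]; split => // j Hj; move: (HJ j); rewrite /= Hj.
set t := fun j => tsuf j (a j).
case: (arg_maxnP (fun j => size (t j)) Hm0) => m Hm Hmax.
exists (t m); split; first by apply: reduced_tsuf; case: (Ha m Hm).
move=> j Hj y.
have [Haj Ecj] := Ha j Hj.
rewrite Ecj; apply: iff_trans; first exact: coset_char.
apply: cos_tsuf.
case: (eqVneq j m) => [->|Hjm]; first by rewrite /t tsufK.
have [Ham Ecm] := Ha m Hm.
have [y0 [Y1 Y2]] := Hinc j m Hj Hm Hjm.
rewrite Ecj in Y1; rewrite Ecm in Y2.
have [b [Hb [Eb Tb]]] := (coset_char j y0 Hg Haj).1 Y1.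
have [b' [Hb' [Eb' Tb']]] := (coset_char m y0 Hg Ham).1 Y2.
have Ebb : b = b' by apply: (fe_inj Hind) => //; rewrite -Eb -Eb'.
subst b'.
have Hs := Hmax j Hj.
rewrite /t /= -Tb -Tb' in Hs *.
rewrite /tsuf in Hs *.
set kj := find (fun x => x.1 == j) b in Hs *.
set km := find (fun x => x.1 == m) b in Hs *.
have Hkj : kj <= size b by apply: find_size.
have Hkm : km <= size b by apply: find_size.
rewrite !size_drop in Hs.
have Hle : km <= kj.
  by move: Hs Hkj Hkm; clear; move: kj km (size b) => p q r; lia.
by rewrite find_drop // drop_drop subnK.
Qed.

Theorem mainTheorem7 (n : nat) (I : finType) (g : I -> fword n) :
  independent_set g -> flag_transitive g.
Proof.
move=> Hindep J c1 c2 F1 F2.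
have [z1 [Hz1 H1]] := common Hindep F1.
have [z2 [Hz2 H2]] := common Hindep F2.
have [Hg _ _] := Hindep.
exists (fg_eval g (winv z1 ++ z2)); split.
  by apply/(Gsub_char Hg); eexists.
move=> j Hj y; split.
  move=> [y' [/(H1 j Hj) [b [Hb [-> Tb]]] ->]].
  apply/(H2 j Hj).
  have [h [Hh Eh]] := tsuf_mulI Hb (esym Tb).
  exists (freduce (h ++ z2)); split; first exact: freduce_red.
  split; last exact: tsuf_mulE.
  rewrite /fg_mul -fe_cat -Eh fe_catl fe_reduce -catA.
  by rewrite -[LHS]fe_reduce freduce_cancel fe_reduce.
move/(H2 j Hj) => [b [Hb [-> Tb]]].
have [h [Hh Eh]] := tsuf_mulI Hb (esym Tb).
exists (fg_eval g (freduce (h ++ z1))); split.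
  apply/(H1 j Hj); exists (freduce (h ++ z1)); split; first exact: freduce_red.
  by split => //; apply: tsuf_mulE.
rewrite /fg_mul -fe_cat -Eh fe_catl fe_reduce -catA.
by rewrite -[RHS]fe_reduce freduce_cancel fe_reduce.
Qed.
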